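(* Let $n=m=1$, so that $A,B\in\mathbb{R}$ and $Q,R>0$ are scalars, and consider the setting described in the context with $q<q_c$ and an estimate $\hat q\in[0,q_c)$. Then the certainty-equivalence gain $\hat K=-(R+B^2\hat P)^{-1}AB\hat P$ mean-square stabilizes the system $x_{t+1}=Ax_t+\lambda_tBu_t$ under $u_t=\hat Kx_t$ if and only if $$Q+(1-q)R\hat K^2+(\hat q-q)(R+B^2\hat P)^{-1}A^2B^2\hat P^2>0 .$$ Moreover, if $\hat q\ge q$, this inequality holds.
   Context: Let $A\in\mathbb{R}^{n\times n}$, $B\in\mathbb{R}^{n\times m}$ with $(A,B)$ stabilizable, and let $Q\in\mathbb{R}^{n\times n}$, $R\in\mathbb{R}^{m\times m}$ be symmetric positive definite. Consider $x_{t+1}=Ax_t+\lambda_tBu_t$, $t=0,1,2,\dots$, where $x_0$ is a random vector with finite mean and covariance and $\{\lambda_t\}$ are i.i.d. Bernoulli random variables, independent of $x_0$, with $\mathcal{P}(\lambda_t=0)=q$, $\mathcal{P}(\lambda_t=1)=1-q$, $q\in(0,1)$. For $p\in[0,1)$ the modified Riccati equation with parameter $p$ is $X=Q+A^\top XA-(1-p)A^\top XB(R+B^\top XB)^{-1}B^\top XA$. The number $q_c$ is the critical loss probability: for every $p\in[0,q_c)$ this equation has a unique positive definite solution (one has $1/\prod_i|\lambda_i^u(A)|^2\le q_c\le 1/\max_i|\lambda_i^u(A)|^2$, where $\lambda_i^u(A)$ are the eigenvalues of $A$ of modulus $\ge1$). For an estimate $\hat q\in[0,q_c)$ of $q$,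 $\hat P$ denotes the positive definite solution of the modified Riccati equation with parameter $\hat q$, and $\hat K=-(R+B^\top\hat PB)^{-1}B^\top\hat PA$. The gain $\hat K$ mean-square stabilizes the system if the closed loop $x_{t+1}=(A+\lambda_tB\hat K)x_t$ satisfies $\lim_{t\to\infty}\mathbb{E}\{x_t^\top x_t\}=0$. *)

(* Defs.v *)
From HB Require Import structures.
From mathcomp Require Import all_boot all_order all_algebra.
From mathcomp Require Import all_classical all_reals all_analysis.
Set Implicit Arguments. Unset Strict Implicit. Unset Printing Implicit Defensive.
Import Order.TTheory GRing.Theory Num.Theory numFieldNormedType.Exports.
Local Open Scope ring_scope.
Local Open Scope classical_set_scope.

Section Defs.
Variable R : realType.

Definition stabilizable (A B : R) : Prop := exists K : R, `|A + B * K| < 1.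

Definition mare (A B Q Rw p X : R) : Prop :=
  X = Q + A * X * A - (1 - p) * (A * X * B) * (Rw + B * X * B)^-1 * (B * X * A).

Definition unique_pos_sol (A B Q Rw p : R) : Prop :=
  exists X : R, [/\ 0 < X, mare A B Q Rw p X &
                    forall Y : R, 0 < Y -> mare A B Q Rw p Y -> Y = X].

Definition qc (A B Q Rw : R) : R :=
  sup [set p : R | 0 <= p <= 1 /\
        forall r : R, 0 <= r -> r < p -> unique_pos_sol A B Q Rw r].

(* closed loop x_{t+1} = (A + lambda_t B K) x_t for a realization l of the
   packet-arrival sequence (true = lambda_t = 1). *)
Fixpoint traj (A B K x0 : R) (l : nat -> bool) (t : nat) : R :=
  match t with
  | 0 => x0
  | t'.+1 => (A + (l t')%:R * B * K) * traj A B K x0 l t'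
  end.

Definition bprob (q : R) (b : bool) : R := if b then 1 - q else q.

Definition ext_real (t : nat) (f : {ffun 'I_t -> bool}) : nat -> bool :=
  fun i => match insub i with Some j => f j | None => false end.

(* expectation over i.i.d. Bernoulli(1-q) lambda_0..lambda_{t-1} of a
   functional of the realization *)
Definition bexp (q : R) (t : nat) (F : (nat -> bool) -> R) : R :=
  \sum_(f : {ffun 'I_t -> bool}) (\prod_(i < t) bprob q (f i)) * F (ext_real f).

Definition ms_stabilizes (A B K q : R) : Prop :=
  forall x0 : R,
    (fun t : nat => bexp q t (fun l => (traj A B K x0 l t) ^+ 2)) @ \oo --> (0 : R^o).

End Defs.

(* Main.v *)
Require Import Defs.
From HB Require Import structures.
From mathcomp Require Import all_boot all_order all_algebra.
From mathcomp Require Import all_classical all_reals all_analysis.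
From mathcomp Require Import ring.
Import Order.TTheory GRing.Theory Num.Theory.
Local Open Scope ring_scope.

Lemma traj_prod (R : realType) (A B K x0 : R) l t :
  traj A B K x0 l t = x0 * \prod_(i < t) (A + (l i)%:R * B * K).
Proof.
elim: t => [|t IH] /=; first by rewrite big_ord0 mulr1.
by rewrite IH big_ord_recr /= [RHS]mulrA mulrC.
Qed.

Lemma bexp_traj (R : realType) (A B K x0 q : R) t :
  bexp q t (fun l => (traj A B K x0 l t) ^+ 2) =
  x0 ^+ 2 * (q * A ^+ 2 + (1 - q) * (A + B * K) ^+ 2) ^+ t.
Proof.
rewrite /bexp.
have -> : (q * A ^+ 2 + (1 - q) * (A + B * K) ^+ 2) =
   \sum_(b : bool) bprob q b * (A + b%:R * B * K) ^+ 2.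
  by rewrite big_bool /= /bprob mul1r !mul0r addr0 addrC.
have -> : forall x : R, x ^+ t = \prod_(i < t) x.
  by move=> x; rewrite prodr_const card_ord.
rewrite bigA_distr_bigA mulr_sumr.
apply: eq_bigr => f _.
rewrite traj_prod exprMn mulrCA -prodrXl -big_split /=; congr (_ * _).
apply: eq_bigr => i _; congr (_ * (A + _%:R * _ * _) ^+ 2).
by rewrite /ext_real valK.
Qed.

Lemma ms_iff (R : realType) (A B K q : R) : 0 <= q <= 1 ->
  ms_stabilizes A B K q <-> q * A ^+ 2 + (1 - q) * (A + B * K) ^+ 2 < 1.
Proof.
move=> /andP[q0 q1].
set rho := q * A ^+ 2 + (1 - q) * (A + B * K) ^+ 2.
have rho0 : 0 <= rho.
  by rewrite /rho addr_ge0 // mulr_ge0 // ?sqr_ge0 // subr_ge0.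
have E : forall x0, (fun t => bexp q t (fun l => (traj A B K x0 l t) ^+ 2))
   = (fun t => x0 ^+ 2 * rho ^+ t).
  by move=> x0; apply/funext => t; rewrite bexp_traj.
split.
- move=> H; rewrite ltNge; apply/negP => r1.
  have := H 1; rewrite E.
  move=> /(cvgr0_norm_lt) /(_ 1 ltr01) [N _ HN].
  have := HN N (leqnn N); rewrite expr1n mul1r ger0_norm ?exprn_ge0 //.
  by rewrite ltNge exprn_ege1.
- move=> r1 x0; rewrite E.
  have r1' : `|rho| < 1 by rewrite ger0_norm.
  have := @cvgMl_tmp R nat _ _ _ (x0 ^+ 2) _ (cvg_expr r1').
  rewrite mulr0; apply; exact: eventually_filter.
Qed.

Theorem theorem1 (R : realType) (A B Q Rw q qh Ph : R) :
  stabilizable A B -> 0 < Q -> 0 < Rw ->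
  0 < q -> q < 1 -> q < qc A B Q Rw ->
  0 <= qh -> qh < qc A B Q Rw ->
  0 < Ph -> mare A B Q Rw qh Ph ->
  let Kh := - (Rw + B ^+ 2 * Ph)^-1 * (A * B * Ph) in
  (ms_stabilizes A B Kh q <->
     0 < Q + (1 - q) * Rw * Kh ^+ 2
           + (qh - q) * (Rw + B ^+ 2 * Ph)^-1 * (A ^+ 2 * B ^+ 2 * Ph ^+ 2))
  /\ (q <= qh ->
     0 < Q + (1 - q) * Rw * Kh ^+ 2
           + (qh - q) * (Rw + B ^+ 2 * Ph)^-1 * (A ^+ 2 * B ^+ 2 * Ph ^+ 2)).
Proof.
move=> _ Q0 Rw0 q0 q1 _ qh0 _ Ph0 M Kh.
have S0 : 0 < Rw + B ^+ 2 * Ph.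
  by rewrite ltr_wpDr // mulr_ge0 // ?sqr_ge0 // ltW.
have S0' : Rw + B * Ph * B != 0.
  by rewrite -mulrA mulrC -mulrA -expr2 mulrC gt_eqF.
have S0'' : Rw + B ^+ 2 * Ph != 0 by rewrite gt_eqF.
split; last first.
  move=> qqh; rewrite ltr_wpDr // ?ltr_wpDr //.
    apply: mulr_ge0; last exact: (mulr_ge0 (mulr_ge0 (sqr_ge0 A) (sqr_ge0 B)) (sqr_ge0 Ph)).
    by rewrite mulr_ge0 // ?subr_ge0 // invr_ge0 ltW.
  apply: mulr_ge0; last exact: sqr_ge0.
  by rewrite mulr_ge0 // ?subr_ge0 ltW.
set rho := q * A ^+ 2 + (1 - q) * (A + B * Kh) ^+ 2.
have key : Q + (1 - q) * Rw * Kh ^+ 2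
           + (qh - q) * (Rw + B ^+ 2 * Ph)^-1 * (A ^+ 2 * B ^+ 2 * Ph ^+ 2)
           = (1 - rho) * Ph.
  apply/eqP; rewrite -subr_eq0; apply/eqP.
  have -> : Q + (1 - q) * Rw * Kh ^+ 2
           + (qh - q) * (Rw + B ^+ 2 * Ph)^-1 * (A ^+ 2 * B ^+ 2 * Ph ^+ 2)
           - (1 - rho) * Ph =
     (Q + A * Ph * A - (1 - qh) * (A * Ph * B) * (Rw + B * Ph * B)^-1 * (B * Ph * A)) - Ph.
    by rewrite /rho /Kh; field.
  by rewrite -M subrr.
rewrite ms_iff; last by rewrite (ltW q0) (ltW q1).
by rewrite key pmulr_lgt0 // subr_gt0.
Qed.
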